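(* For every integer $t\ge 2$, $$\lim_{n\to\infty}\frac{l\bigl(2^{t-1}n+2^{t-2}\bigr)}{l\bigl(2^{t-1}n+2^{t-2}-1\bigr)}=\frac{3F(t-1)}{F(t-1)-2}.$$
   Context: For $n\ge 0$, $c(n)=\sum_{i=0}^{n}\left(\binom{n}{i}\bmod 2\right)2^{i}$, the integer whose binary digits form the $n$-th row of Pascal's triangle modulo $2$; one has $c(2n)\equiv 1\pmod 4$, and $l(n)=\frac{c(2n)-1}{4}$. $F(j)=2^{2^j}+1$ is the $j$-th Fermat number. *)

(* Defs.v *)
From mathcomp Require Import all_boot.

Definition c (n : nat) : nat :=
  (\sum_(i < n.+1) ('C(n, i) %% 2) * expn 2 i)%N.

(* l(n) = (c(2n) - 1)/4  (exact division since c(2n) = 1 mod 4) *)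
Definition l (n : nat) : nat := ((c (2 * n) - 1) %/ 4)%N.

Definition F (j : nat) : nat := (expn 2 (expn 2 j) + 1)%N.

(* Main.v *)
Require Import Defs.
From mathcomp Require Import all_boot.
From Stdlib Require Import Reals.
From Coquelicot Require Import Coquelicot.
From mathcomp Require Import zify.
From Stdlib Require Import Lia Lra Psatz.
Open Scope nat_scope.

Definition g (x n : nat) : nat := (\sum_(i < n.+1) odd 'C(n, i) * expn x i).

Lemma c_g n : c n = g 2 n.
Proof. by rewrite /c /g; apply: eq_bigr => i _; rewrite modn2. Qed.

Lemma odd_binSS n j : odd 'C(n.+2, j.+2) = odd 'C(n, j.+2) (+) odd 'C(n, j).
Proof.
rewrite !binS !oddD; case: (odd 'C(n, j.+1)); case: (odd 'C(n, j.+2)); case: (odd 'C(n,j)) => //.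
Qed.

Lemma bin_even_odd k i : odd 'C(k.*2, i.*2.+1) = false.
Proof.
elim: k i => [|k IH] i; first by rewrite bin0n.
case: i => [|i]; first by rewrite bin1 odd_double.
rewrite !doubleS odd_binSS IH.
have -> : (i.*2.+3 = (i.+1).*2.+1) by rewrite doubleS.
by rewrite IH.
Qed.

Lemma bin_even_even k i : odd 'C(k.*2, i.*2) = odd 'C(k, i).
Proof.
elim: k i => [|k IH] i.
  by case: i => [|i] //; rewrite !bin0n.
case: i => [|i]; first by rewrite !bin0.
rewrite !doubleS odd_binSS.
have -> : (i.*2.+2 = (i.+1).*2) by rewrite doubleS.
rewrite !IH binS oddD; by case: (odd _); case: (odd _).
Qed.

Lemma bin_odd_even k i : odd 'C(k.*2.+1, i.*2) = odd 'C(k, i).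
Proof.
case: i => [|i]; first by rewrite !bin0.
have -> : ((i.+1).*2 = (i.*2.+1).+1) by rewrite doubleS.
rewrite binS oddD bin_even_odd.
have -> : ((i.*2.+1).+1 = (i.+1).*2) by rewrite doubleS.
by rewrite bin_even_even addbF.
Qed.

Lemma bin_odd_odd k i : odd 'C(k.*2.+1, i.*2.+1) = odd 'C(k, i).
Proof. by rewrite binS oddD bin_even_odd bin_even_even. Qed.

Lemma sum_pairs N (f : nat -> nat) :
  (\sum_(i < N.*2) f i = \sum_(i < N) (f i.*2 + f i.*2.+1)).
Proof.
elim: N => [|N IH]; first by rewrite !big_ord0.
by rewrite doubleS !big_ord_recr /= IH addnA.
Qed.

Lemma false_mul n : muln false n = 0. Proof. by []. Qed.

Lemma g_even x k : g x k.*2 = g (expn x 2) k.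
Proof.
rewrite /g.
have E : \sum_(i < (k.+1).*2) odd 'C(k.*2, i) * expn x i = \sum_(i < k.*2.+1) odd 'C(k.*2, i) * expn x i.
  by rewrite doubleS big_ord_recr /= bin_small ?ltnSn // false_mul addn0.
rewrite -E (sum_pairs k.+1 (fun i => odd 'C(k.*2, i) * expn x i)).
apply: eq_bigr => i _; rewrite bin_even_odd bin_even_even false_mul addn0.
by rewrite -expnM mul2n.
Qed.

Lemma g_odd x k : g x k.*2.+1 = ((1 + x) * g (expn x 2) k).
Proof.
rewrite /g -doubleS (sum_pairs k.+1 (fun i => odd 'C(k.*2.+1, i) * expn x i)).
rewrite big_distrr; apply: eq_bigr => i _.
rewrite bin_odd_odd bin_odd_even -expnM mul2n expnS.
by rewrite /= mulnDl mul1n [x * (_ * _)]mulnCA.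
Qed.

Lemma g_pow s x a : g x (expn 2 s * a) = g (expn x (expn 2 s)) a.
Proof.
elim: s x a => [|s IH] x a; first by rewrite expn0 mul1n expn1.
by rewrite expnSr -mulnA mul2n IH g_even expnM.
Qed.

Lemma g_ones s x n :
  g x (expn 2 s * n + (expn 2 s - 1)) = (\prod_(j < s) (1 + expn x (expn 2 j))) * g (expn x (expn 2 s)) n.
Proof.
elim: s x => [|s IH] x; first by rewrite big_ord0 expn0 mul1n subnn addn0 mul1n expn1.
have -> : expn 2 s.+1 * n + (expn 2 s.+1 - 1) = (expn 2 s * n + (expn 2 s - 1)).*2.+1.
  have h := expn_gt0 2 s; rewrite expnS -mul2n; lia.
rewrite g_odd IH big_ord_recl expn0 expn1 mulnA; congr (_ * _ * _).
- by apply: eq_bigr => j _; rewrite -expnM expnS mulnC.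
- by rewrite -expnM expnS mulnC.
Qed.


Lemma g_one x n : g x n = 1 + x * \sum_(i < n) odd 'C(n, i.+1) * expn x i.
Proof.
rewrite /g big_ord_recl bin0 expn0 muln1 big_distrr /=; congr (_ + _).
by apply: eq_bigr => i _; rewrite /bump /= expnS mulnCA.
Qed.

Lemma g_ge x n : expn x n <= g x n.
Proof.
rewrite /g big_ord_recr /= binn /=.
rewrite mul1n; exact: leq_addl.
Qed.

Lemma l_g k : l k = \sum_(i < k) odd 'C(k, i.+1) * expn 4 i.
Proof.
rewrite /l c_g mul2n g_even g_one.
have -> : expn 2 2 = 4 by [].
by rewrite addnC addnK mulKn.
Qed.

Lemma g4_l k : g 4 k = 1 + 4 * l k.
Proof. by rewrite l_g g_one. Qed.

Lemma prod_tel s : 3 * (\prod_(j < s) (1 + expn 4 (expn 2 j))) + 1 = expn 4 (expn 2 s).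
Proof.
elim: s => [|s IH]; first by rewrite big_ord0.
rewrite big_ord_recr /= expnS [2 * _]mulnC expnM -IH.
set P := \prod_(j < s) _. nia.
Qed.

Lemma INR_addn a b : INR (addn a b) = (INR a + INR b)%R.
Proof. exact: plus_INR. Qed.
Lemma INR_muln a b : INR (muln a b) = (INR a * INR b)%R.
Proof. exact: mult_INR. Qed.

Lemma INR_l k : INR (l k) = ((INR (g 4 k) - 1) / 4)%R.
Proof. rewrite g4_l INR_addn INR_muln /=; field. Qed.

Lemma ltP' a b : a < b -> (a < b)%coq_nat.
Proof. by move/ltP. Qed.

Theorem mainTheorem9 (t : nat) (ht : leq 2 t) :
  is_lim_seq
    (fun n : nat =>
       (INR (l (addn (muln (expn 2 (subn t 1)) n) (expn 2 (subn t 2))))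
        / INR (l (subn (addn (muln (expn 2 (subn t 1)) n) (expn 2 (subn t 2))) 1)))%R)
    (Finite (3 * INR (F (subn t 1)) / (INR (F (subn t 1)) - 2))%R).
Proof.
have [u ->] : exists u, t = u.+2 by exists (t - 2); lia.
have -> : subn u.+2 1 = u.+1 by lia.
have -> : subn u.+2 2 = u by lia.
set A := expn 4 (expn 2 u).
set Q := \prod_(j < u) (1 + expn 4 (expn 2 j)).
have hQ : 3 * Q + 1 = A := prod_tel u.
have hF : F u.+1 = A + 1 by rewrite /F expnS expnM.
have hA : 1 < A by rewrite /A -[1](expn0 4) ltn_exp2l // expn_gt0.
have hA2 : 1 < expn A 2 by rewrite (expnS A 1) expn1; nia.
have hQ1 : 0 < Q by lia.
have G1 n : g 4 (expn 2 u.+1 * n + expn 2 u) = (1 + A) * g (expn A 2) n.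
  have -> : expn 2 u.+1 * n + expn 2 u = expn 2 u * (n.*2.+1) by rewrite expnS -mul2n; lia.
  by rewrite g_pow g_odd.
have G2 n : g 4 (expn 2 u.+1 * n + expn 2 u - 1) = Q * g (expn A 2) n.
  have h := expn_gt0 2 u.
  have -> : expn 2 u.+1 * n + expn 2 u - 1 = expn 2 u * n.*2 + (expn 2 u - 1) by rewrite expnS -mul2n; lia.
  by rewrite g_ones g_even.
have Gge n : n < g (expn A 2) n := leq_trans (ltn_expl n hA2) (g_ge _ _).
set p := fun n => INR (g (expn A 2) n).
have Hp : is_lim_seq p p_infty.
  apply: (is_lim_seq_le_p_loc INR); last exact: is_lim_seq_INR.
  exists 0%nat => n _; apply: le_INR; apply/leP; exact: ltnW.
have Hinv : is_lim_seq (fun n => / p n)%R 0%R.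
  have := is_lim_seq_inv _ p_infty Hp ltac:(discriminate); by [].
have hQR : (1 <= INR Q)%R by apply: (le_INR 1); apply/leP.
have hAR : INR A = (3 * INR Q + 1)%R.
  have := f_equal INR hQ; rewrite INR_addn INR_muln => <-; simpl; ring.
eapply (is_lim_seq_ext_loc (fun n => ((1 + INR A) - / p n) / (INR Q - / p n))%R).
  exists 1%nat => n hn.
  rewrite !INR_l G1 G2 !INR_muln INR_addn -/(p n).
  have hpn : (1 < p n)%R.
    apply: (lt_INR 1); apply: ltP'; apply: leq_trans (Gge n); apply/leP; lia.
  change (INR 1) with 1%R.
  field; split; nra.
have -> : (3 * INR (F u.+1) / (INR (F u.+1) - 2))%R = (((1 + INR A) - 0) / (INR Q - 0))%R.
  rewrite hF INR_addn hAR; change (INR 1) with 1%R; field; lra.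
apply: is_lim_seq_div'.
- apply: is_lim_seq_minus'; [exact: is_lim_seq_const | exact: Hinv].
- apply: is_lim_seq_minus'; [exact: is_lim_seq_const | exact: Hinv].
- lra.
Qed.
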